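(* Let $\Lambda,\Gamma$ be row-finite $k$-graphs and let $p:\Lambda\to\Gamma$ be a surjective $k$-graph morphism with $r$-path lifting. If $\Lambda$ is cofinal, then $\Gamma$ is cofinal.
   Context: A $k$-graph is a countable category $\Lambda$ with a functor $d:\Lambda\to\mathbb{N}^k$ with unique factorisation. $\Lambda^n=d^{-1}(n)$, $\Lambda^0$ = vertices, $uXv=\{\lambda\in X: r(\lambda)=u, s(\lambda)=v\}$; row-finite: $v\Lambda^n$ finite. A $k$-graph morphism is a degree-preserving functor. A surjective $k$-graph morphism $p:\Lambda\to\Gamma$ has $r$-path lifting if for all $v\in\Lambda^0$ and $\lambda\in p(v)\Gamma$ there is $\lambda'\in v\Lambda$ with $p(\lambda')=\lambda$. A $k$-graph $\Lambda$ is cofinal if for all $v,w\in\Lambda^0$ there is $N\in\mathbb{N}^k$ such that $v\Lambda s(\alpha)\neq\emptyset$ for every $\alpha\in w\Lambda^N$. *)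

(* Defs.v *)
From Stdlib Require Import List.
From mathcomp Require Import all_boot.
Set Implicit Arguments. Unset Strict Implicit. Unset Printing Implicit Defensive.

Definition degk (k : nat) := {ffun 'I_k -> nat}.
Definition dzero (k : nat) : degk k := [ffun _ => 0].
Definition dadd (k : nat) (m n : degk k) : degk k := [ffun i => m i + n i].

(* Composition [comp l m] (= l m) is a total function but is only
   constrained when s l = r m (composable pair). *)
Record kgraph (k : nat) := KGraph {
  kvert : Type;
  kpath : Type;
  rng : kpath -> kvert;
  src : kpath -> kvert;
  idp : kvert -> kpath;
  comp : kpath -> kpath -> kpath;
  deg : kpath -> degk k;
  rng_idp : forall v, rng (idp v) = v;
  src_idp : forall v, src (idp v) = v;
  rng_comp : forall l m, src l = rng m -> rng (comp l m) = rng l;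
  src_comp : forall l m, src l = rng m -> src (comp l m) = src m;
  comp_idl : forall l, comp (idp (rng l)) l = l;
  comp_idr : forall l, comp l (idp (src l)) = l;
  compA : forall l m n, src l = rng m -> src m = rng n ->
            comp l (comp m n) = comp (comp l m) n;
  deg_idp : forall v, deg (idp v) = dzero k;
  deg_comp : forall l m, src l = rng m -> deg (comp l m) = dadd (deg l) (deg m);
  factor : forall l (m n : degk k), deg l = dadd m n ->
             exists mu nu, [/\ src mu = rng nu, deg mu = m, deg nu = n
                              & l = comp mu nu];
  factor_uniq : forall mu nu mu' nu',
             src mu = rng nu -> src mu' = rng nu' ->
             deg mu = deg mu' -> deg nu = deg nu' ->
             comp mu nu = comp mu' nu' -> mu = mu' /\ nu = nu';
  vert_countable : exists f : kvert -> nat, injective f;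
  path_countable : exists f : kpath -> nat, injective f
}.

Arguments rng {k} _ _.
Arguments src {k} _ _.
Arguments idp {k} _ _.
Arguments comp {k} _ _ _.
Arguments deg {k} _ _.

Definition row_finite k (L : kgraph k) : Prop :=
  forall (v : kvert L) (n : degk k),
    exists s : list (kpath L),
      forall l, rng L l = v -> deg L l = n -> In l s.

Definition kgraph_morphism k (L G : kgraph k)
    (pv : kvert L -> kvert G) (pp : kpath L -> kpath G) : Prop :=
  [/\ forall l, rng G (pp l) = pv (rng L l),
      forall l, src G (pp l) = pv (src L l),
      forall v, pp (idp L v) = idp G (pv v),
      forall l m, src L l = rng L m -> pp (comp L l m) = comp G (pp l) (pp m)
    & forall l, deg G (pp l) = deg L l].

(* surjective morphism: surjective on paths (hence also on vertices) *)
Definition surjective_morphism k (L G : kgraph k)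
    (pv : kvert L -> kvert G) (pp : kpath L -> kpath G) : Prop :=
  kgraph_morphism pv pp /\ (forall g, exists l, pp l = g).

Definition r_path_lifting k (L G : kgraph k)
    (pv : kvert L -> kvert G) (pp : kpath L -> kpath G) : Prop :=
  forall (v : kvert L) (g : kpath G), rng G g = pv v ->
    exists l, rng L l = v /\ pp l = g.

Definition cofinal k (L : kgraph k) : Prop :=
  forall v w : kvert L, exists N : degk k,
    forall a, rng L a = w -> deg L a = N ->
      exists l, rng L l = v /\ src L l = src L a.

(* Main.v *)
Require Import Defs.
From mathcomp Require Import all_boot.

Theorem theorem4p7 (k : nat) (L G : kgraph k)
    (pv : kvert L -> kvert G) (pp : kpath L -> kpath G) :
  row_finite L -> row_finite G ->
  surjective_morphism pv pp -> r_path_lifting pv pp ->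
  cofinal L -> cofinal G.
Proof.
move=> _ _ [[Hr Hs Hid Hc Hd] Hsur] Hlift Hcof v w.
have vsur : forall x, exists y, pv y = x.
  move=> x; have [l Hl] := Hsur (idp G x).
  exists (rng L l); by rewrite -Hr Hl rng_idp.
have [v' Hv] := vsur v; have [w' Hw] := vsur w.
have [N HN] := Hcof v' w'.
exists N => a Ha Hda.
have [a' [Ha' Hpa]] := Hlift w' a (etrans Ha (esym Hw)).
have Hda' : deg L a' = N by rewrite -Hd Hpa.
have [l [Hl1 Hl2]] := HN a' Ha' Hda'.
exists (pp l); split; first by rewrite Hr Hl1.
by rewrite Hs Hl2 -Hs Hpa.
Qed.
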